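(* Let $\Sigma^*$ be an $n\times n$ positive definite matrix whose conditional independence structure is a tree $T^*$, let $D^*$ be a diagonal matrix with nonnegative entries, and let $\Sigma^o=\Sigma^*+D^*$. Let $\lambda_{\min}$ be a real number that is at most the smallest eigenvalue of $\Sigma^*$, and suppose $D^*_{bb}<\lambda_{\min}$ for every node $b$ of $T^*$ that is the neighbor of a leaf of $T^*$. Then for every decomposition $\Sigma^o=\Sigma'+D'$ in which $\Sigma'$ is positive definite with smallest eigenvalue at least $\lambda_{\min}$ and conditional independence structure a tree $T'$, and $D'$ is diagonal with nonnegative entries, we have $T'=T^*$.
   Context: For an $n\times n$ positive definite matrix $\Sigma$ with inverse $\Omega$, its conditional independence structure is the graph on $\{1,\dots,n\}$ with an edge $\{i,j\}$ ($i\neq j$) iff $\Omega_{ij}\neq 0$. *)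

(* Defs.v *)
From HB Require Import structures.
From mathcomp Require Import all_boot all_order all_algebra.
From mathcomp Require Import reals.
Set Implicit Arguments. Unset Strict Implicit. Unset Printing Implicit Defensive.
Import Order.TTheory GRing.Theory Num.Theory.
Local Open Scope ring_scope.

Section Defs.
Variable R : realType.

Definition posdef n (A : 'M[R]_n) : Prop :=
  A^T = A /\ forall x : 'cV[R]_n, x != 0 -> 0 < (x^T *m A *m x) 0 0.

Definition nonneg_diag n (D : 'M[R]_n) : Prop :=
  is_diag_mx D /\ forall i, 0 <= D i i.

Definition min_eig_ge n (A : 'M[R]_n) (lam : R) : Prop :=
  forall a : R, eigenvalue A a -> lam <= a.

Definition ci_graph n (S : 'M[R]_n) : rel 'I_n :=
  fun i j => (i != j) && (invmx S i j != 0).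
End Defs.

Definition connected_graph n (e : rel 'I_n) : Prop :=
  forall i j, connect e i j.

Definition acyclic_graph n (e : rel 'I_n) : Prop :=
  ~ exists s : seq 'I_n, [/\ 3 <= size s, uniq s & cycle e s]%N.

Definition is_tree n (e : rel 'I_n) : Prop :=
  connected_graph e /\ acyclic_graph e.

Definition is_leaf n (e : rel 'I_n) (l : 'I_n) : Prop :=
  #|[set j | e l j]| = 1%N.

Definition leaf_neighbor n (e : rel 'I_n) (b : 'I_n) : Prop :=
  exists l, is_leaf e l /\ e l b.

(* Main.v *)
Require Import Defs.
From HB Require Import structures.
From mathcomp Require Import all_boot all_order all_algebra.
From mathcomp Require Import reals.
From mathcomp Require Import complex ring lra.
Import Order.TTheory GRing.Theory Num.Theory.
Local Open Scope ring_scope.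
Set Implicit Arguments. Unset Strict Implicit. Unset Printing Implicit Defensive.

Section Eig.
Variable R : realType.
Local Notation C := (R[i]).
Local Notation f := (real_complex R).

Lemma conj_f (x : R) : ((f x)^*)%R = f x.
Proof. apply/CrealP. rewrite realE !lecE /= eqxx /=. exact: le_total. Qed.

Lemma Creal_f (z : C) : z \is Num.real -> z = f (complex.Re z).
Proof.
case: z => a b; rewrite realE !lecE /=.
by move=> /orP[] /andP[/eqP E _]; [rewrite E | rewrite -E].
Qed.

Open Scope sesquilinear_scope.

Lemma eig_quad n (S : 'M[R]_n) lam : S^T = S -> min_eig_ge S lam ->
  forall x : 'cV[R]_n, lam * (x^T *m x) 0 0 <= (x^T *m S *m x) 0 0.
Proof.
move=> Ssym Heig x.
pose A := map_mx f S.
have Aherm : A \is hermsymmx.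
  rewrite is_hermitianmxE expr0 scale1r; apply/eqP/matrixP=> i j.
  by rewrite !mxE conj_f -[in LHS]Ssym mxE.
pose P := spectralmx A; pose d := spectral_diag A.
have PU : P \is unitarymx := spectral_unitarymx A.
have AE : A = P^t* *m diag_mx d *m P.
  by rewrite -invmx_unitary //; apply/orthomx_spectralP/hermitian_normalmx.
have PPt : P *m P^t* = 1%:M by apply/unitarymxP.
have PtP : P^t* *m P = 1%:M := mulmx1C PPt.
have dreal : forall i, lam <= complex.Re (d 0 i).
  move=> i; apply: Heig.
  rewrite eigenvalue_root_char -(fmorph_root f) map_char_poly -eigenvalue_root_char.
  have /mxOverP /(_ 0 i) dr := hermitian_spectral_diag_real Aherm.
  suff : eigenvalue A (d 0 i) by rewrite [d 0 i](Creal_f dr).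
  apply/eigenvalueP; exists (row i P).
    rewrite -row_mul -/A AE !mulmxA PPt mul1mx mul_diag_mx.
    by apply/rowP => j; rewrite !mxE.
  apply/negP => /eqP h.
  have := congr1 (fun M => row i M) PPt.
  rewrite row_mul h mul0mx row1 => /rowP /(_ i); rewrite !mxE eqxx /=.
  by move=> /esym/eqP; rewrite eqxx oner_eq0.
pose xc := map_mx f x.
pose y := P *m xc.
have xcC : xc^t* = xc^T by apply/matrixP => i j; rewrite !mxE conj_f.
have ytE : y^t* = xc^T *m P^t*.
  apply/matrixP => i j; rewrite !mxE rmorph_sum; apply: eq_bigr => k _; rewrite !mxE rmorphM mulrC; congr (_ * _); exact: conj_f.
have q1 : f ((x^T *m S *m x) 0 0) = \sum_j ((y j 0)^* * d 0 j * y j 0).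
  have -> : f ((x^T *m S *m x) 0 0) = (y^t* *m diag_mx d *m y) 0 0.
    rewrite ytE /y.
    have -> : xc^T *m P^t* *m diag_mx d *m (P *m xc) = xc^T *m A *m xc by rewrite AE !mulmxA.
    by rewrite /xc /A map_trmx -!map_mxM [in RHS]mxE.
  by rewrite mxE; apply: eq_bigr => j _; rewrite mul_mx_diag !mxE.
have q2 : f ((x^T *m x) 0 0) = \sum_j ((y j 0)^* * y j 0).
  have -> : f ((x^T *m x) 0 0) = (y^t* *m y) 0 0.
    rewrite ytE /y.
    have -> : xc^T *m P^t* *m (P *m xc) = xc^T *m xc by rewrite mulmxA -(mulmxA xc^T) PtP mulmx1.
    by rewrite /xc map_trmx -!map_mxM [in RHS]mxE.
  by rewrite mxE; apply: eq_bigr => j _; rewrite !mxE.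
rewrite -subr_ge0 -ler0c rmorphB rmorphM.
change (0 <= f ((x^T *m S *m x) 0 0) - f lam * f ((x^T *m x) 0 0)).
rewrite q1 q2 mulr_sumr -sumrB.
apply: sumr_ge0 => j _.
rewrite [d 0 j](Creal_f (mxOverP (hermitian_spectral_diag_real Aherm) 0 j)).
move: (y j 0) (dreal j); rewrite /d; move: (complex.Re _) => r z Hr.
have -> : z^* * (r%:C)%C * z - (lam%:C)%C * (z^* * z) = ((r - lam)%:C)%C * (z * z^*).
  rewrite rmorphB /=; ring.
by apply: mulr_ge0; [rewrite ler0c subr_ge0 | exact: mul_conjC_ge0].
Qed.
Close Scope sesquilinear_scope.
End Eig.

Section Mx.
Variable R : realType.
Variable n : nat.
Implicit Types S : 'M[R]_n.

Definition ev (j : 'I_n) : 'cV[R]_n := delta_mx j 0.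

Lemma qf_ev S j k : ((ev j)^T *m S *m ev k) 0 0 = S j k.
Proof.
rewrite /ev trmx_delta -rowE -colE !mxE. done.
Qed.

Lemma qf_evM S j k : (ev j)^T *m S *m ev k = const_mx (S j k).
Proof. by apply/matrixP => a c; rewrite !ord1 qf_ev mxE. Qed.

Lemma qf2 S j m a b : let x := a *: ev j + b *: ev m in
  (x^T *m S *m x) 0 0 = a * a * S j j + a * b * S j m + b * a * S m j + b * b * S m m.
Proof.
move=> x; rewrite /x !raddfD /= !linearZ /= !mulmxDl.
rewrite -!scalemxAl !qf_evM !mxE.
ring.
Qed.

Lemma posdef_unit S : posdef S -> S \in unitmx.
Proof.
move=> [Ssym Sp]; case: (boolP (S \in unitmx)) => // nU; exfalso.
move: nU; rewrite unitmxE unitfE negbK => /det0P [v v0 vS].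
have := Sp v^T; rewrite trmx_eq0 => /(_ v0).
by rewrite trmxK vS mul0mx mxE ltxx.
Qed.

Lemma posdef_diag S j : posdef S -> 0 < S j j.
Proof.
move=> [_ Sp]; have := Sp (ev j).
rewrite qf_ev; apply; apply/negP => /eqP/matrixP/(_ j 0); rewrite !mxE !eqxx /=.
by move/eqP; rewrite oner_eq0.
Qed.

Lemma posdef_sym S i j : posdef S -> S i j = S j i.
Proof. by move=> [Ssym _]; rewrite -{1}Ssym mxE. Qed.

Lemma posdef_2x2 S j m : posdef S -> j != m -> S j m ^+ 2 < S j j * S m m.
Proof.
move=> SP jm; have Smm := posdef_diag m SP.
have := SP.2 (S m m *: ev j + (- S j m) *: ev m).
rewrite qf2 (posdef_sym m j SP).
have -> : S m m *: ev j + - S j m *: ev m != 0.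
  apply/negP => /eqP/matrixP/(_ j 0); rewrite !mxE !eqxx (negbTE jm) /= mulr1 mulr0 addr0.
  by move/eqP; rewrite gt_eqF.
move=> /(_ isT) h.
have : 0 < S m m * (S j j * S m m - S j m ^+ 2) by move: h; congr (_ < _); ring.
by rewrite pmulr_rgt0 // subr_gt0.
Qed.

Lemma gap S lam j m : posdef S -> min_eig_ge S lam -> j != m ->
  S j m ^+ 2 <= (S j j - lam) * S m m.
Proof.
move=> SP H jm.
have Smm := posdef_diag m SP.
have S2 := posdef_2x2 SP jm.
have := eig_quad SP.1 H (S m m *: ev j + (- S j m) *: ev m).
set x := (S m m *: ev j + (- S j m) *: ev m).
have -> : (x^T *m x) 0 0 = (x^T *m 1%:M *m x) 0 0 by rewrite mulmx1.
rewrite !qf2 (posdef_sym m j SP) !mxE !eqxx (negbTE jm) eq_sym (negbTE jm) /= => E.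
have [lam0|lam0] := leP 0 lam; last by nra.
have : S m m * ((S j j - lam) * S m m - S j m ^+ 2) >= lam * S j m ^+ 2 by nra.
move=> h; have : 0 <= S m m * ((S j j - lam) * S m m - S j m ^+ 2).
  by apply: le_trans h; nra.
by rewrite pmulr_rge0 // subr_ge0.
Qed.
End Mx.

Section G.
Variable n : nat.
Definition avoid (e : rel 'I_n) (j : 'I_n) : rel 'I_n :=
  fun a b => [&& e a b, a != j & b != j].

Lemma connect_avoid_ne e j x y : connect (avoid e j) x y -> x != j -> y != j.
Proof.
move/connectP => [p pth ->]; elim: p x pth => //= a p IH x /andP[/and3P[_ _ aj] pth] _.
exact: IH pth aj.
Qed.
End G.

Section L1.
Variable R : realType.
Variable n : nat.

Lemma sep_eq (S : 'M[R]_n) j i k : posdef S -> i != j -> k != j ->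
  ~~ connect (avoid (ci_graph S) j) i k -> S j j * S i k = S i j * S j k.
Proof.
move=> SP ij kj nc.
set e := ci_graph S; set K := invmx S.
have SU := posdef_unit SP.
have SK : S *m K = 1%:M := mulmxV SU.
have KS : K *m S = 1%:M := mulVmx SU.
have Sjj := posdef_diag j SP.
pose A := [set x | connect (avoid e j) i x].
have iA : i \in A by rewrite inE connect0.
have neA : forall a, a \in A -> a != j.
  by move=> a; rewrite inE => /connect_avoid_ne; apply.
have kA : k \notin A by rewrite inE.
pose c := S j k / S j j.
pose v : 'cV_n := col k S - c *: col j S.
have Kv : forall a, (K *m v) a 0 = (a == k)%:R - c * (a == j)%:R.
  by move=> a; rewrite mulmxBr -scalemxAr !colE !mulmxA KS !mul1mx !mxE !eqxx !andbT.
have vj : v j 0 = 0 by rewrite !mxE /c divfK ?subrr // gt_eqF.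
pose u : 'cV_n := \col_a (if a \in A then v a 0 else 0).
have Ku : forall a, a \in A -> (K *m u) a 0 = 0.
  move=> a aA.
  have -> : (K *m u) a 0 = (K *m v) a 0.
    rewrite !mxE; apply: eq_bigr => b _; rewrite !mxE.
    case: ifP => // bA.
    case: (eqVneq b j) => [->|bj]; first by rewrite /c divfK ?subrr ?mulr0 // gt_eqF.
    have ab : a != b by apply: contraTneq aA => ->; rewrite bA.
    suff -> : K a b = 0 by rewrite !mul0r.
    apply/eqP; apply: contraFT bA => Kab.
    rewrite inE; apply: connect_trans (_ : connect _ i a) _; first by rewrite inE in aA.
    by apply: connect1; rewrite /avoid /e /ci_graph ab Kab neA ?bj.
  have ak : a != k by apply: contraTneq aA => ->.
  by rewrite Kv (negbTE ak) (negbTE (neA a aA)) mulr0 subr0.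
have uw : (u^T *m (K *m u)) 0 0 = 0.
  rewrite mxE big1 // => a _; rewrite mxE.
  case: (boolP (a \in A)) => aA; first by rewrite Ku ?mulr0.
  by rewrite mxE (negbTE aA) mul0r.
pose w := K *m u.
have uSw : u = S *m w by rewrite /w mulmxA SK mul1mx.
have w0 : w = 0.
  apply/eqP; apply: contraT => wn0; have := SP.2 w wn0.
  rewrite -mulmxA -uSw.
  have -> : (w^T *m u) 0 0 = (u^T *m w) 0 0 by rewrite -[w^T *m u]trmxK trmx_mul trmxK mxE.
  by rewrite uw ltxx.
have u0 : u = 0 by rewrite uSw w0 mulmx0.
have := congr1 (fun M : 'cV[R]_n => M i 0) u0; rewrite !mxE iA /c => h.
have Sjj0 : S j j != 0 by rewrite gt_eqF.
apply/eqP; rewrite -subr_eq0; apply/eqP.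
have -> : S j j * S i k - S i j * S j k = S j j * (S i k - S j k / S j j * S i j) by field.
by rewrite h mulr0.
Qed.
End L1.

Section Graph.
Variable n : nat.
Variable e : rel 'I_n.
Hypothesis esym : symmetric e.
Hypothesis eirr : irreflexive e.
Hypothesis etree : is_tree e.

Lemma avoid_symm j : symmetric (avoid e j).
Proof. by move=> a b; rewrite /avoid esym andbA [(b != j) && _]andbC andbA. Qed.

Lemma avoid_csym j x y : connect (avoid e j) x y = connect (avoid e j) y x.
Proof. exact: (sym_connect_sym (avoid_symm j)). Qed.

Lemma path_avoid j x s : path e x s -> all (fun y => y != j) (x :: s) -> path (avoid e j) x s.
Proof.
elim: s x => //= a s IH x /andP[exa pth] /and3P[xj aj alls].
by rewrite /avoid exa xj aj /= IH //= aj.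
Qed.

Lemma upath (r : rel 'I_n) x y : connect r x y -> exists p, [/\ path r x p, uniq (x :: p) & last x p = y].
Proof.
move/connectP => [p pth ->]; case: (shortenP pth) => p' pth' up' _.
by exists p'.
Qed.

Lemma avoid_sub j : subrel (avoid e j) e.
Proof. by move=> a b /andP[]. Qed.

Lemma G2 i k j : e i k -> j != i -> j != k ->
  ~~ connect (avoid e i) j k \/ ~~ connect (avoid e k) j i.
Proof.
move=> eik ji jk.
case: (boolP (connect (avoid e i) j k)) => c1; last by left.
case: (boolP (connect (avoid e k) j i)) => c2; last by right.
exfalso.
pose f := [rel a b | e a b && ~~ ((a == i) && (b == k) || (a == k) && (b == i))].
have fsym : symmetric f.
  move=> a b; rewrite /f /= esym; congr (_ && ~~ _).
  by case: (a == i); case: (b == k); case: (a == k); case: (b == i).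
have s1 : subrel (avoid e i) f.
  move=> a b /and3P[eab ai bi]; rewrite /f /= eab (negbTE ai) (negbTE bi) /=.
  by rewrite andbF.
have s2 : subrel (avoid e k) f.
  move=> a b /and3P[eab ak bk]; rewrite /f /= eab (negbTE ak) (negbTE bk) /=.
  by rewrite andbF.
have cfjk : connect f j k by apply: connect_sub c1 => a b /s1 /connect1.
have cfji : connect f j i by apply: connect_sub c2 => a b /s2 /connect1.
have cfki : connect f k i.
  by apply: connect_trans cfji; rewrite (sym_connect_sym fsym).
have ik : i != k by apply: contraTneq eik => ->; rewrite eirr.
case: (upath cfki) => p [pth up lst].
case: p pth up lst => [|a p] pth up lst; first by move: lst => /= /eqP; rewrite eq_sym (negbTE ik).
case: p pth up lst => [|b p] pth up lst.
  by move: pth lst => /= /andP[fka _] ai; move: fka; rewrite ai /f /= !eqxx orbT andbF.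
apply: etree.2; exists [:: k, a, b & p]; split => //.
rewrite /cycle rcons_path (sub_path _ pth) /=; last by move=> x y /andP[].
by move: lst => /= ->.
Qed.

Lemma notin_all (j : 'I_n) (s : seq 'I_n) : j \notin s -> all (fun y => y != j) s.
Proof. by move=> jn; apply/allP => y yin; apply: contraNneq jn => <-. Qed.

Lemma first_step j i : j != i -> exists m, e j m /\ connect (avoid e j) m i.
Proof.
move=> ji; case: (upath (etree.1 j i)) => p [pth up lst].
case: p pth up lst => [|m q] pth up lst; first by move: lst => /= /eqP; rewrite (negbTE ji).
move: pth up => /= /andP[ejm pth] /andP[jn uq].
exists m; split => //.
apply/connectP; exists q => //; apply: path_avoid => //.
exact: notin_all.
Qed.

Lemma path_sep x m q : path e x (m :: q) -> uniq (x :: m :: q) -> last m q != m ->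
  ~~ connect (avoid e m) x (last m q).
Proof.
move=> /= /andP[exm pth] /andP[xn um] zm.
have zin : last m q \in m :: q by rewrite mem_last.
have zx : last m q != x by apply: contraNneq xn => <-.
case: (G2 exm zx zm) => h; last by rewrite avoid_csym.
exfalso; move/negP: h; apply; rewrite avoid_csym.
apply/connectP; exists q => //; apply: path_avoid pth _.
exact: notin_all.
Qed.

Lemma G3 i k : i != k -> ~~ e i k ->
  exists j, [/\ j != i, j != k & ~~ connect (avoid e j) i k].
Proof.
move=> ik nik; case: (upath (etree.1 i k)) => p [pth up lst].
case: p pth up lst => [|m q] pth up lst; first by move: lst => /= /eqP; rewrite (negbTE ik).
have mk : m != k.
  by apply: contraNneq nik => mk; move: pth => /= /andP[]; rewrite mk.
have mi : m != i.
  by move: up => /= /andP[]; rewrite inE negb_or eq_sym => /andP[].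
exists m; split => //.
move: lst => /= lst.
have lm : last m q != m by rewrite lst eq_sym.
by have := path_sep pth up lm; rewrite lst.
Qed.

Lemma avoid_mono m j i x : ~~ connect (avoid e m) i j ->
  connect (avoid e m) i x -> connect (avoid e j) i x.
Proof.
move=> nij /connectP [p pth ->]; apply/connectP; exists p => //.
apply: path_avoid (sub_path (@avoid_sub m) pth) _.
apply/allP => y yin; apply: contraNneq nij => yj; rewrite -yj.
exact: (path_connect pth yin).
Qed.

End Graph.

Section TreeMx.
Variable R : realType.
Variable n : nat.
Variable S : 'M[R]_n.
Variable lam : R.
Hypothesis SP : posdef S.
Hypothesis Stree : is_tree (ci_graph S).
Hypothesis Seig : min_eig_ge S lam.
Local Notation e := (ci_graph S).

Lemma ci_sym : symmetric e.
Proof.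
move=> a b; rewrite /ci_graph eq_sym; congr (_ && (_ != 0)).
by rewrite -[in RHS]SP.1 -trmx_inv mxE.
Qed.

Lemma ci_irr : irreflexive e.
Proof. by move=> a; rewrite /ci_graph eqxx. Qed.

Lemma Ssym a b : S a b = S b a.
Proof. exact: posdef_sym. Qed.

Lemma edge_nz i k : e i k -> S i k != 0.
Proof.
move=> eik; apply/negP => /eqP Sik.
have ik : i != k by apply: contraTneq eik => ->; rewrite ci_irr.
pose A := [set x | connect (avoid e k) i x].
have neA a : a \in A -> a != k.
  by rewrite inE => /connect_avoid_ne; apply.
have H1 : forall a, a \in A -> S a k = 0.
  move=> a aA; case: (eqVneq a i) => [->//|ai].
  have ak := neA a aA.
  case: (G2 ci_sym ci_irr Stree eik ai ak) => h.
    have ki : k != i by rewrite eq_sym.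
    have := sep_eq SP ai ki h; rewrite Sik mulr0 => /eqP.
    by rewrite mulf_eq0 gt_eqF ?posdef_diag //= => /eqP.
  by move: h; rewrite (avoid_csym ci_sym); rewrite inE in aA; rewrite aA.
have H2 : forall a b, a \in A -> b \notin A -> S a b = 0.
  move=> a b aA bA; case: (eqVneq b k) => [->|bk]; first exact: H1.
  have : ~~ connect (avoid e k) a b.
    apply: contra bA => cab; rewrite inE; apply: connect_trans cab.
    by rewrite inE in aA.
  move/(sep_eq SP (neA a aA) bk); rewrite (H1 a aA) mul0r => /eqP.
  by rewrite mulf_eq0 gt_eqF ?posdef_diag //= => /eqP.
pose K := invmx S.
have SU := posdef_unit SP.
have SK : S *m K = 1%:M := mulmxV SU.
have KS : K *m S = 1%:M := mulVmx SU.
pose u : 'cV_n := \col_a (if a \in A then K a k else 0).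
have Su0 : S *m u = 0.
  apply/matrixP => a c; rewrite ord1 !mxE.
  case: (boolP (a \in A)) => aA.
    have ak := neA a aA.
    transitivity ((S *m K) a k); last by rewrite SK mxE (negbTE ak).
    rewrite mxE; apply: eq_bigr => b _; rewrite mxE.
    by case: ifP => // /negbT bA; rewrite H2 // !mul0r.
  rewrite big1 // => b _; rewrite mxE; case: ifP => bA; last by rewrite mulr0.
  by rewrite Ssym H2 // mul0r.
have u0 : u = 0 by rewrite -[u]mul1mx -KS -mulmxA Su0 mulmx0.
have := congr1 (fun M : 'cV[R]_n => M i 0) u0; rewrite !mxE inE connect0 => Kik.
by move: eik; rewrite /ci_graph -/K Kik eqxx andbF.
Qed.

Lemma path_nz q : forall x m, path e x (m :: q) -> uniq (x :: m :: q) -> S x (last m q) != 0.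
Proof.
elim: q => [|y q IH] x m; first by move=> /= /andP[exm _] _; exact: edge_nz.
move=> pth up.
have lm : last m (y :: q) != m.
  move: up => /= /and3P[_ + _]; apply: contraNneq => <-.
  by rewrite mem_last.
have h := sep_eq SP _ lm (path_sep ci_sym ci_irr Stree pth up lm).
have xm : x != m by move: up => /= /andP[]; rewrite inE negb_or => /andP[].
move: h => /(_ xm) h.
move: pth up => /= /andP[exm pth] /andP[_ up].
have h1 := edge_nz exm.
have h2 := IH m y pth up.
have : S m m * S x (last y q) != 0.
  by rewrite h mulf_neq0.
by rewrite mulf_eq0 negb_or => /andP[].
Qed.

Lemma offdiag_nz i k : i != k -> S i k != 0.
Proof.
move=> ik; case: (upath (Stree.1 i k)) => p [pth up lst].
case: p pth up lst => [|m q] pth up lst; first by move: lst => /= /eqP; rewrite (negbTE ik).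
by move: lst => /= <-; exact: path_nz.
Qed.

Lemma R2 i k : i != k -> forall j, j != i -> j != k -> connect (avoid e j) i k ->
  exists t, [/\ t <= S j j - lam, t < S j j & S i j * S j k = t * S i k].
Proof.
move=> ik.
suff H : forall N j, (#|[set x | connect (avoid e j) i x]| <= N)%N ->
    j != i -> j != k -> connect (avoid e j) i k ->
    exists t, [/\ t <= S j j - lam, t < S j j & S i j * S j k = t * S i k].
  by move=> j; exact: H _ j (leqnn _).
elim=> [|N IH] j.
  move=> cA ji; exfalso; move: cA; apply/negP; rewrite -ltnNge.
  by apply/card_gt0P; exists i; rewrite inE connect0.
move=> cardA ji jk cik.
have [m [ejm cmi]] := first_step Stree ji.
set A := [set x | connect (avoid e j) i x] in cardA.
have neA x : x \in A -> x != j.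
  by rewrite inE => /connect_avoid_ne; apply; rewrite eq_sym.
have mA : m \in A by rewrite inE (avoid_csym ci_sym).
have kA : k \in A by rewrite inE.
have iA : i \in A by rewrite inE connect0.
have jm : j != m by apply: contraTneq ejm => ->; rewrite ci_irr.
have mj : m != j by rewrite eq_sym.
have Smm := posdef_diag m SP.
have Smm0 : S m m != 0 by rewrite gt_eqF.
have Hx : forall x, x \in A -> S m m * S x j = S x m * S m j.
  move=> x xA; case: (eqVneq x m) => [->|xm]; first by [].
  have xj := neA x xA.
  case: (G2 ci_sym ci_irr Stree ejm xj xm) => h.
    exfalso; move/negP: h; apply.
    apply: connect_trans (_ : connect _ x i) _.
      by rewrite (avoid_csym ci_sym); rewrite inE in xA.
    by rewrite inE in mA.
  exact: sep_eq SP xm jm h.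
have [t' [t'le Qeq]] : exists t', t' <= S m m /\ S i m * S m k = t' * S i k.
  case: (eqVneq m i) => [->|mi]; first by exists (S i i).
  case: (eqVneq m k) => [->|mk]; first by exists (S k k); rewrite mulrC.
  case: (boolP (connect (avoid e m) i k)) => cm; last first.
    by exists (S m m); split => //; rewrite (sep_eq SP _ _ cm) // eq_sym.
  have nimj : ~~ connect (avoid e m) i j.
    have ij : i != j by rewrite eq_sym.
    have im : i != m by rewrite eq_sym.
    case: (G2 ci_sym ci_irr Stree ejm ij im) => // h.
    by exfalso; move/negP: h; apply; rewrite inE in mA; rewrite (avoid_csym ci_sym).
  have sub : [set x | connect (avoid e m) i x] \proper A.
    apply/properP; split.
      apply/subsetP => x; rewrite !inE; exact: avoid_mono.
    exists m => //; rewrite inE; apply/negP => /connect_avoid_ne.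
    by rewrite eq_sym mi eqxx => /(_ isT).
  have := proper_card sub => clt.
  have [t [h1 h2 h3]] := IH m (leq_trans clt cardA) mi mk cm.
  by exists t; split => //; apply: ltW.
have e1 : S i j = S i m * S m j / S m m by rewrite -(Hx i iA); field.
have e2 : S j k = S k m * S m j / S m m by rewrite Ssym -(Hx k kA); field.
have g1 := gap SP Seig jm.
have g2 := posdef_2x2 SP jm.
exists (S m j ^+ 2 / S m m ^+ 2 * t'); split.
- apply: (@le_trans _ _ (S m j ^+ 2 / S m m)).
    have -> : S m j ^+ 2 / S m m = S m j ^+ 2 / S m m ^+ 2 * S m m by field.
    by apply: ler_wpM2l => //; apply: divr_ge0; rewrite ?sqr_ge0.
  by rewrite ler_pdivrMr // (Ssym m j).
- apply: (@le_lt_trans _ _ (S m j ^+ 2 / S m m)).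
    have -> : S m j ^+ 2 / S m m = S m j ^+ 2 / S m m ^+ 2 * S m m by field.
    by apply: ler_wpM2l => //; apply: divr_ge0; rewrite ?sqr_ge0.
  by rewrite ltr_pdivrMr // (Ssym m j).
- rewrite e1 e2 -[RHS]mulrA -Qeq (Ssym k m); field; exact: Smm0.
Qed.
Lemma Qb b i k : i != k -> exists t, t <= S b b /\ S i b * S b k = t * S i k.
Proof.
move=> ik.
case: (eqVneq b i) => [->|bi]; first by exists (S i i).
case: (eqVneq b k) => [->|bk]; first by exists (S k k); rewrite mulrC.
case: (boolP (connect (avoid e b) i k)) => cb.
  have [t [_ h2 h3]] := R2 ik bi bk cb.
  by exists t; split => //; apply: ltW.
exists (S b b); split => //; rewrite (sep_eq SP _ _ cb) // eq_sym //.
Qed.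

Lemma AL j b i k : j != b -> i != k ->
  S j j * S i k = S i j * S j k ->
  S b b * S j i = S j b * S b i ->
  S b b * S j k = S j b * S b k -> False.
Proof.
move=> jb ik H1 H2 H3.
have [t [tle Qe]] := Qb b ik.
have nz := offdiag_nz ik.
have Sbb := posdef_diag b SP.
have g := posdef_2x2 SP jb.
have E : S i k * (S j j * S b b ^+ 2) = S j b ^+ 2 * (S i b * S b k).
  transitivity ((S j j * S i k) * S b b ^+ 2); first by ring.
  rewrite H1; transitivity ((S b b * S j i) * (S b b * S j k)); first by rewrite (Ssym j i); ring.
  by rewrite H2 H3 (Ssym b i); ring.
rewrite Qe in E.
have E2 : S i k * (S j j * S b b ^+ 2 - S j b ^+ 2 * t) = 0.
  by rewrite mulrBr E; ring.
move: E2 => /eqP; rewrite mulf_eq0 (negbTE nz) /= subr_eq0 => /eqP E3.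
have h1 : 0 <= S j b ^+ 2 * (S b b - t) by apply: mulr_ge0; rewrite ?sqr_ge0 ?subr_ge0.
have h2 : 0 < (S j j * S b b - S j b ^+ 2) * S b b by apply: mulr_gt0; rewrite ?subr_gt0.
nra.
Qed.

End TreeMx.

Section Two.
Variable R : realType.
Variable n : nat.
Variables Sa Sb : 'M[R]_n.
Variable lam : R.
Hypothesis Pa : posdef Sa.
Hypothesis Ta : is_tree (ci_graph Sa).
Hypothesis Ga : min_eig_ge Sa lam.
Hypothesis Pb : posdef Sb.
Hypothesis Tb : is_tree (ci_graph Sb).
Hypothesis Gb : min_eig_ge Sb lam.
Hypothesis off : forall i k, i != k -> Sa i k = Sb i k.

Lemma K2 j i k : i != k -> i != j -> k != j ->
  ~~ connect (avoid (ci_graph Sa) j) i k -> connect (avoid (ci_graph Sb) j) i k ->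
  Sa j j <= Sb j j - lam /\
  forall i' k', i' != k' -> i' != j -> k' != j -> connect (avoid (ci_graph Sb) j) i' k'.
Proof.
move=> ik ij kj sa cb.
have ji : j != i by rewrite eq_sym.
have jk : j != k by rewrite eq_sym.
have h1 := sep_eq Pa ij kj sa.
have [t [t1 t2 t3]] := R2 Pb Tb Gb ik ji jk cb.
rewrite (off ik) (off ij) (off jk) t3 in h1.
have nz := offdiag_nz Pb Tb ik.
have E : Sa j j = t by apply: (mulIf nz).
split; first by rewrite E.
move=> i' k' i'k' i'j k'j; apply/negPn/negP => sb'.
have ji' : j != i' by rewrite eq_sym.
have jk' : j != k' by rewrite eq_sym.
have hb := sep_eq Pb i'j k'j sb'.
have nz' := offdiag_nz Pb Tb i'k'.
case: (boolP (connect (avoid (ci_graph Sa) j) i' k')) => ca.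
  have [t' [u1 u2 u3]] := R2 Pa Ta Ga i'k' ji' jk' ca.
  rewrite (off i'j) (off jk') (off i'k') -hb in u3.
  have E' : Sb j j = t' by apply: (mulIf nz').
  by move: u2; rewrite -E' E => /(lt_trans t2); rewrite ltxx.
have ha := sep_eq Pa i'j k'j ca.
rewrite (off i'k') (off i'j) (off jk') -hb in ha.
have E' : Sa j j = Sb j j by apply: (mulIf nz').
by move: t2; rewrite -E E' ltxx.
Qed.
End Two.

Section Main.
Variable R : realType.
Variable n : nat.
Variables S1 D1 : 'M[R]_n.
Variable lam : R.
Variables S2 D2 : 'M[R]_n.
Hypothesis P1 : posdef S1.
Hypothesis T1 : is_tree (ci_graph S1).
Hypothesis N1 : nonneg_diag D1.
Hypothesis G1 : min_eig_ge S1 lam.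
Hypothesis LN : forall b, leaf_neighbor (ci_graph S1) b -> D1 b b < lam.
Hypothesis EQ : S1 + D1 = S2 + D2.
Hypothesis P2 : posdef S2.
Hypothesis G2e : min_eig_ge S2 lam.
Hypothesis T2 : is_tree (ci_graph S2).
Hypothesis N2 : nonneg_diag D2.
Local Notation e1 := (ci_graph S1).
Local Notation e2 := (ci_graph S2).

Lemma off12 i k : i != k -> S1 i k = S2 i k.
Proof.
move=> ik; have := congr1 (fun M : 'M[R]_n => M i k) EQ; rewrite !mxE.
have /is_diag_mxP d1 := N1.1; have /is_diag_mxP d2 := N2.1.
by rewrite d1 ?d2 // !addr0.
Qed.

Lemma off21 i k : i != k -> S2 i k = S1 i k.
Proof. by move=> ik; rewrite off12. Qed.

Lemma diagD b : S1 b b + D1 b b = S2 b b + D2 b b.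
Proof. by have := congr1 (fun M : 'M[R]_n => M b b) EQ; rewrite !mxE. Qed.

Lemma LeafInternal j i k : i != k -> i != j -> k != j ->
  ~~ connect (avoid e2 j) i k ->
  (forall i' k', i' != k' -> i' != j -> k' != j -> connect (avoid e1 j) i' k') -> False.
Proof.
move=> ik ij kj s2 all1.
have ji : j != i by rewrite eq_sym.
have [b [ejb _]] := first_step T1 ji.
have jb : j != b by apply: contraTneq ejb => ->; rewrite ci_irr.
have bj : b != j by rewrite eq_sym.
have sep1b : forall x, x != j -> x != b -> ~~ connect (avoid e1 b) j x.
  move=> x xj xb; case: (G2 (ci_sym P1) (@ci_irr _ _ S1) T1 ejb xj xb) => h.
    by exfalso; move/negP: h; apply; apply: all1.
  by rewrite (avoid_csym (ci_sym P1)).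
have leafj : is_leaf e1 j.
  rewrite /is_leaf.
  have -> : [set y | e1 j y] = [set b]; last by rewrite cards1.
  apply/setP => y; rewrite !inE; apply/idP/eqP => [ejy|->//].
  apply/eqP; apply/negP => /negP yb.
  have yj : y != j by apply: contraTneq ejy => ->; rewrite ci_irr.
  case: (G2 (ci_sym P1) (@ci_irr _ _ S1) T1 ejb yj yb) => h.
    by move/negP: h; apply; apply: all1.
  move/negP: h; apply; apply: connect1.
  by rewrite /avoid (ci_sym P1) ejy yb jb.
have Db : D1 b b < lam by apply: LN; exists j.
have sep2b : forall x, x != j -> x != b -> ~~ connect (avoid e2 b) j x.
  move=> x xj xb; apply/negP => c2.
  have jx : j != x by rewrite eq_sym.
  have [h _] := K2 P1 T1 G1 P2 T2 G2e off12 jx jb xb (sep1b x xj xb) c2.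
  have := diagD b; have := N2.2 b; lra.
have eqb : forall x, x != j -> S2 b b * S2 j x = S2 j b * S2 b x.
  move=> x xj; case: (eqVneq x b) => [->|xb]; first by rewrite mulrC.
  exact: sep_eq P2 jb xb (sep2b x xj xb).
exact: (AL P2 T2 G2e jb ik (sep_eq P2 ij kj s2) (eqb i ij) (eqb k kj)).
Qed.

Lemma main_eq i k : e2 i k = e1 i k.
Proof.
case: (eqVneq i k) => [<-|ik]; first by rewrite !ci_irr.
apply/idP/idP => h.
  apply/negPn/negP => n1.
  have [j [ji jk s1]] := G3 (ci_sym P1) (@ci_irr _ _ S1) T1 ik n1.
  have ij : i != j by rewrite eq_sym.
  have kj : k != j by rewrite eq_sym.
  have c2 : connect (avoid e2 j) i k by apply: connect1; rewrite /avoid h ij kj.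
  have [_ all2] := K2 P1 T1 G1 P2 T2 G2e off12 ik ij kj s1 c2.
  have [c [ejc _]] := first_step T2 ji.
  have jc : j != c by apply: contraTneq ejc => ->; rewrite ci_irr.
  have cj : c != j by rewrite eq_sym.
  have sep2c : forall x, x != j -> x != c -> ~~ connect (avoid e2 c) j x.
    move=> x xj xc; case: (G2 (ci_sym P2) (@ci_irr _ _ S2) T2 ejc xj xc) => h'.
      by exfalso; move/negP: h'; apply; apply: all2.
    by rewrite (avoid_csym (ci_sym P2)).
  have eqc : forall x, x != j -> S1 c c * S1 j x = S1 j c * S1 c x.
    move=> x xj; case: (eqVneq x c) => [->|xc]; first by rewrite mulrC.
    case: (boolP (connect (avoid e1 c) j x)) => c1; last exact: sep_eq P1 jc xc c1.
    exfalso.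
    have jx : j != x by rewrite eq_sym.
    have [_ all1] := K2 P2 T2 G2e P1 T1 G1 off21 jx jc xc (sep2c x xj xc) c1.
    exact: (LeafInternal jx jc xc (sep2c x xj xc) all1).
  exact: (AL P1 T1 G1 jc ik (sep_eq P1 ij kj s1) (eqc i ij) (eqc k kj)).
apply/negPn/negP => n2.
have [j [ji jk s2]] := G3 (ci_sym P2) (@ci_irr _ _ S2) T2 ik n2.
have ij : i != j by rewrite eq_sym.
have kj : k != j by rewrite eq_sym.
have c1 : connect (avoid e1 j) i k by apply: connect1; rewrite /avoid h ij kj.
have [_ all1] := K2 P2 T2 G2e P1 T1 G1 off21 ik ij kj s2 c1.
exact: (LeafInternal ik ij kj s2 all1).
Qed.
End Main.

Unset Implicit Arguments.

Theorem theorem5 (R : realType) (n : nat)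
  (Sigma_star D_star : 'M[R]_n) (lam_min : R) :
  posdef Sigma_star ->
  is_tree (ci_graph Sigma_star) ->
  nonneg_diag D_star ->
  min_eig_ge Sigma_star lam_min ->
  (forall b, leaf_neighbor (ci_graph Sigma_star) b -> D_star b b < lam_min) ->
  forall Sigma' D' : 'M[R]_n,
    Sigma_star + D_star = Sigma' + D' ->
    posdef Sigma' ->
    min_eig_ge Sigma' lam_min ->
    is_tree (ci_graph Sigma') ->
    nonneg_diag D' ->
    ci_graph Sigma' =2 ci_graph Sigma_star.
Proof.
move=> P1 T1 N1 G1 LN S2 D2 EQ P2 G2e T2 N2 i k.
exact: (main_eq P1 T1 N1 G1 LN EQ P2 G2e T2 N2 i k).
Qed.
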